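(* Let $\Gamma$ be a finite group and $\mathbf{E}=\bigoplus_{w\in\Gamma}\mathbf{E}_w$ a finite-dimensional associative $\bar{\mathbb{Q}}_l$-algebra with $1$, with $\dim\mathbf{E}_w=1$ and $\mathbf{E}_w\mathbf{E}_y=\mathbf{E}_{wy}$ for all $w,y$; for each $w$ choose a basis element $b_w$ of $\mathbf{E}_w$ (each $b_w$ is invertible). Let $V,V'$ be simple $\mathbf{E}$-modules and $t:V\to V$, $t':V'\to V'$ invertible $\bar{\mathbb{Q}}_l$-linear maps, and set $N=|\Gamma|^{-1}\sum_{w\in\Gamma}\mathrm{tr}(b_wt,V)\,\mathrm{tr}(t'^{-1}b_w^{-1},V')$. Then $N=0$ if $V,V'$ are not isomorphic $\mathbf{E}$-modules, and $N=1$ if $V=V'$ and $t=t'$. *)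

(* Defs.v *)
From HB Require Import structures.
From mathcomp Require Import all_boot all_order all_algebra all_fingroup all_field.
Set Implicit Arguments. Unset Strict Implicit. Unset Printing Implicit Defensive.
Import GRing.Theory.
Local Open Scope ring_scope.

(* A (left) E-module structure on F^n (column vectors): an F-algebra
   morphism rho : E -> 'M[F]_n (linear, unital, multiplicative);
   e acts on a column vector v by v |-> rho e *m v. *)
Definition is_module (F : fieldType) (E : falgType F) (n : nat)
    (rho : E -> 'M[F]_n) : Prop :=
  [/\ forall (a : F) (x y : E), rho (a *: x + y) = a *: rho x + rho y,
      rho 1 = 1%:M
    & forall x y : E, rho (x * y) = rho x *m rho y].

(* A subspace W of column
   vectors is encoded as the row space of U = W^T, so that stability
   rho e *m W <= W reads U *m (rho e)^T <= U. *)
Definition simple_module (F : fieldType) (E : falgType F) (n : nat)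
    (rho : E -> 'M[F]_n) : Prop :=
  is_module rho /\ (0 < n)%N /\
  forall U : 'M[F]_n, (forall e : E, (U *m (rho e)^T <= U)%MS) ->
    (\rank U = 0)%N \/ row_full U.

Definition module_iso (F : fieldType) (E : falgType F) (n n' : nat)
    (rho : E -> 'M[F]_n) (rho' : E -> 'M[F]_n') : Prop :=
  exists Q : 'M[F]_(n', n), [/\ row_free Q, row_full Q &
    forall e : E, Q *m rho e = rho' e *m Q].

Definition Nsum (F : fieldType) (E : falgType F) (gT : finGroupType)
    (b : gT -> E) (n n' : nat) (rho : E -> 'M[F]_n) (t : 'M[F]_n)
    (rho' : E -> 'M[F]_n') (t' : 'M[F]_n') : F :=
  (#|gT|%:R)^-1 *
    \sum_(w : gT) \tr (rho (b w) *m t) * \tr (invmx t' *m rho' (b w)^-1).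

(* Main.v *)
Require Import Defs.
From HB Require Import structures.
From mathcomp Require Import all_boot all_order all_algebra all_fingroup all_field.
From mathcomp Require Import zify ring.
Import GRing.Theory.
Local Open Scope ring_scope.

Lemma mod0 (F : fieldType) (E : falgType F) n (rho : E -> 'M[F]_n) :
  is_module rho -> rho 0 = 0.
Proof.
case=> hl _ _; have := hl 1 0 0; rewrite scaler0 addr0 scale1r.
by move/(congr1 (fun M => M - rho 0)); rewrite subrr addrK => <-.
Qed.

Lemma modD (F : fieldType) (E : falgType F) n (rho : E -> 'M[F]_n) :
  is_module rho -> forall x y, rho (x + y) = rho x + rho y.
Proof. by move=> h x y; have [hl _ _] := h; have := hl 1 x y; rewrite !scale1r. Qed.

Lemma modZ (F : fieldType) (E : falgType F) n (rho : E -> 'M[F]_n) :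
  is_module rho -> forall a x, rho (a *: x) = a *: rho x.
Proof.
by move=> h a x; have [hl _ _] := h; rewrite -[a *: x]addr0 hl (mod0 _ _ _ _ h) addr0.
Qed.

Lemma modsum (F : fieldType) (E : falgType F) n (rho : E -> 'M[F]_n)
  (I : finType) (c : I -> F) (v : I -> E) :
  is_module rho -> rho (\sum_i c i *: v i) = \sum_i c i *: rho (v i).
Proof.
move=> h; elim/big_rec2: _ => [|i y1 y2 _ <-]; first by rewrite (mod0 _ _ _ _ h).
by rewrite (modD _ _ _ _ h) (modZ _ _ _ _ h).
Qed.

Lemma schur (F : fieldType) (E : falgType F) n n' (rho : E -> 'M[F]_n)
  (rho' : E -> 'M[F]_n') (hV : simple_module rho) (hV' : simple_module rho')
  (X : 'M[F]_(n, n')) (hX : forall e, rho e *m X = X *m rho' e) :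
  X = 0 \/ (n = n' /\ \rank X = n).
Proof.
case: hV => _ [n0 hs]; case: hV' => _ [n0' hs'].
have himg : forall e, (<<X^T>>%MS *m (rho e)^T <= <<X^T>>)%MS.
  move=> e; rewrite (eqmxMr _ (genmxE _)) genmxE -trmx_mul hX trmx_mul.
  exact: submxMl.
have hker : forall e, (kermx X^T *m (rho' e)^T <= kermx X^T)%MS.
  move=> e; apply/sub_kermxP; rewrite -mulmxA -trmx_mul -hX trmx_mul mulmxA.
  by rewrite mulmx_ker mul0mx.
have rX : (\rank X <= n')%N by rewrite rank_leq_col.
case: (hs _ himg) => [|rf].
  rewrite genmxE mxrank_tr.
  by move/eqP; rewrite mxrank_eq0 => /eqP ->; left.
have rn : \rank X = n by apply/eqP; move: rf; rewrite /row_full genmxE mxrank_tr.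
case: (hs' _ hker) => [|h].
  rewrite mxrank_ker mxrank_tr rn.
  move=> h; right; split=> //; move: h rX n0; rewrite rn; lia.
move: h; rewrite /row_full mxrank_ker mxrank_tr rn => /eqP h.
exfalso; move: h rX n0; rewrite rn; lia.
Qed.

Lemma schur_scalar (F : closedFieldType) (E : falgType F) n (rho : E -> 'M[F]_n)
  (hV : simple_module rho) (Y : 'M[F]_n)
  (hY : forall e, rho e *m Y = Y *m rho e) : exists mu, Y = mu%:M.
Proof.
have n0 : (0 < n)%N by case: hV => _ [].
have [mu hmu] : exists mu, root (char_poly Y) mu.
  by apply/closed_rootP; rewrite size_char_poly; case: n n0 {rho hV Y hY}.
exists mu; move: hmu; rewrite -eigenvalue_root_char => /eigenvalueP [v hv vn0].
have hZ : forall e, rho e *m (Y - mu%:M) = (Y - mu%:M) *m rho e.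
  by move=> e; rewrite mulmxBr mulmxBl hY mul_mx_scalar mul_scalar_mx.
case: (schur _ _ _ _ _ _ hV hV _ hZ) => [/eqP|[_ rk]]; first by rewrite subr_eq0 => /eqP.
have : (Y - mu%:M) \in unitmx by rewrite -row_free_unit /row_free rk.
move=> U; exfalso; move/eqP: vn0; apply.
by rewrite -(mulmxK U v) mulmxBr hv mul_mx_scalar subrr mul0mx.
Qed.

Lemma alg_facts (F : fieldType) (gT : finGroupType) (E : falgType F)
    (Es : gT -> {vspace E})
    (hdim : forall w : gT, \dim (Es w) = 1%N)
    (hmul : forall w y : gT, prodv (Es w) (Es y) = Es (w * y)%g)
    (hsum : (\sum_(w : gT) Es w)%VS = fullv)
    (b : gT -> E)
    (hb : forall w : gT, b w \in Es w /\ b w != 0) :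
  [/\ forall e : E, exists c : gT -> F, e = \sum_w c w *: b w,
      forall w, b w \is a GRing.unit
    & forall w y, exists2 c : F, c != 0 & b w * b y = c *: b (w * y)%g].
Proof.
have Eline w : Es w = <[b w]>%VS.
  apply/eqP; rewrite eq_sym eqEdim -memvE (hb w).1 dim_vline (hb w).2 hdim.
  by [].
have bprod w y : exists2 c : F, c != 0 & b w * b y = c *: b (w * y)%g.
  have h := hmul w y; rewrite !Eline prodv_line in h.
  have : b w * b y \in <[b (w * y)%g]>%VS by rewrite -h memv_line.
  case/vlineP=> c hc; exists c => //; apply/negP=> /eqP c0.
  have := dim_vline (b w * b y); rewrite h dim_vline (hb _).2 hc c0 scale0r.
  by rewrite eqxx.
have span e : exists c : gT -> F, e = \sum_w c w *: b w.
  have : e \in (\sum_(w : gT) Es w)%VS by rewrite hsum memvf.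
  case/memv_sumP=> vs hvs ->.
  have ex w : exists k, vs w == k *: b w.
    have /vlineP[k ->] : vs w \in <[b w]>%VS by rewrite -Eline hvs.
    by exists k.
  by exists (fun w => xchoose (ex w)); apply: eq_bigr => w _; apply/eqP; exact: (xchooseP (ex w)).
have [c1 c10 h11] := bprod 1%g 1%g; rewrite mulg1 in h11.
pose f := c1^-1 *: b 1%g.
have ff : f * f = f.
  rewrite /f -scalerAl -scalerAr h11 !scalerA.
by rewrite divfK.
have fb w : f * b w = b w.
  have [d d0 hd] := bprod 1%g w; rewrite mul1g in hd.
  have : f * b w = (c1^-1 * d) *: b w by rewrite /f -scalerAl hd scalerA.
  set d' := c1^-1 * d => hfd.
  have := congr1 (fun x => x * b w) ff; rewrite -mulrA hfd -scalerAr hfd scalerA.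
  move/eqP; rewrite -subr_eq0 -scalerBl scaler_eq0 (negbTE (hb w).2) orbF.
  rewrite -{3}[d']mulr1 -mulrBr mulf_eq0 subr_eq0 => /orP[|/eqP d1].
    by rewrite /d' mulf_eq0 invr_eq0 (negbTE c10) (negbTE d0).
  by rewrite d1 scale1r.
have fe e : f * e = e.
  have [c ->] := span e; rewrite mulr_sumr; apply: eq_bigr => w _.
  by rewrite -scalerAr fb.
have b1 : b 1%g = c1 *: 1.
  have : f = 1 by rewrite -[f]mulr1 fe.
  by rewrite /f => <-; rewrite scalerA mulfV // scale1r.
split=> // w.
have [c c0 hc] := bprod w w^-1%g; rewrite mulgV b1 scalerA in hc.
have [c' c0' hc'] := bprod w^-1%g w; rewrite mulVg b1 scalerA in hc'.
have cc0 : c * c1 != 0 by rewrite mulf_neq0.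
have cc0' : c' * c1 != 0 by rewrite mulf_neq0.
have r1 : b w * ((c * c1)^-1 *: b w^-1%g) = 1.
  by rewrite -scalerAr hc scalerA mulVf // scale1r.
have l1 : ((c' * c1)^-1 *: b w^-1%g) * b w = 1.
  by rewrite -scalerAl hc' scalerA mulVf // scale1r.
apply/unitrP; exists ((c * c1)^-1 *: b w^-1%g); split=> //.
rewrite -[RHS]l1; congr (_ * _).
by rewrite -[LHS]mul1r -l1 -mulrA r1 mulr1.
Qed.

Lemma sum_delta (R : nzRingType) m (G : 'I_m -> R) i :
  \sum_k G k * (i == k)%:R = G i.
Proof.
rewrite (bigD1 i) //= eqxx mulr1 big1 ?addr0 // => k.
by rewrite eq_sym => /negbTE ->; rewrite mulr0.
Qed.

Lemma mul_delta_entry (R : nzRingType) m n q p (A : 'M[R]_(m, n)) (B : 'M[R]_(q, p))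
  j l i k : (A *m delta_mx j l *m B) i k = A i j * B l k.
Proof.
rewrite mxE (bigD1 l) //= big1 ?addr0.
  rewrite mxE (bigD1 j) //= big1 ?addr0; first by rewrite mxE !eqxx mulr1.
  by move=> y /negbTE hy; rewrite mxE hy mulr0.
move=> x /negbTE hx; rewrite mxE big1 ?mul0r // => y _.
by rewrite mxE hx andbF mulr0.
Qed.

Lemma key_sum (R : comNzRingType) (gT : finType) n n' (A : gT -> 'M[R]_n)
  (B : gT -> 'M[R]_n') (t : 'M[R]_n) (s : 'M[R]_n') :
  \sum_w \tr (A w *m t) * \tr (s *m B w) =
  \sum_i \sum_j \sum_k \sum_l t j i * s k l *
     (\sum_w A w *m delta_mx j l *m B w) i k.
Proof.
rewrite /mxtrace.
under eq_bigr => w _ do rewrite big_distrl /=.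
rewrite exchange_big; apply: eq_bigr => i _.
under eq_bigr => w _ do rewrite mxE big_distrl /=.
rewrite exchange_big; apply: eq_bigr => j _.
under eq_bigr => w _ do rewrite big_distrr /=.
rewrite exchange_big; apply: eq_bigr => k _.
under eq_bigr => w _ do rewrite mxE big_distrr /=.
rewrite exchange_big; apply: eq_bigr => l _.
rewrite summxE mulr_sumr; apply: eq_bigr => w _.
rewrite mul_delta_entry; ring.
Qed.

Lemma S_inter (F : fieldType) (gT : finGroupType) (E : falgType F) n n'
  (rho : E -> 'M[F]_n) (rho' : E -> 'M[F]_n')
  (hm : is_module rho) (hm' : is_module rho') (b : gT -> E)
  (span : forall e : E, exists c : gT -> F, e = \sum_w c w *: b w)
  (bu : forall w, b w \is a GRing.unit)
  (bprod : forall w y, exists2 c : F, c != 0 & b w * b y = c *: b (w * y)%g)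
  (X : 'M[F]_(n, n')) :
  forall e, rho e *m (\sum_w rho (b w) *m X *m rho' (b w)^-1) =
            (\sum_w rho (b w) *m X *m rho' (b w)^-1) *m rho' e.
Proof.
have [_ _ hM] := hm; have [_ _ hM'] := hm'.
have claim y w : rho (b y) *m (rho (b w) *m X *m rho' (b w)^-1) =
    (rho (b (y * w)%g) *m X *m rho' (b (y * w)%g)^-1) *m rho' (b y).
  have [c c0 hc] := bprod y w.
  have e1 : b (y * w)%g = c^-1 *: (b y * b w) by rewrite hc scalerA mulVf // scale1r.
  have inv : (b w)^-1 = (c^-1 *: (b (y * w)%g)^-1) * b y.
 rewrite e1 invrZ; first last.
    - by rewrite unitrMl ?bu.
    - by rewrite unitfE invr_eq0.
    - rewrite invrK scalerA mulVf // scale1r.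
      by rewrite invrM ?bu // -mulrA mulVr ?bu // mulr1.
  rewrite inv hM' (modZ _ _ _ _ hm') !mulmxA -hM hc (modZ _ _ _ _ hm).
  rewrite -!scalemxAl -scalemxAr -!scalemxAl scalerA mulfV // scale1r.
  by [].
have hb y : rho (b y) *m (\sum_w rho (b w) *m X *m rho' (b w)^-1) =
            (\sum_w rho (b w) *m X *m rho' (b w)^-1) *m rho' (b y).
  rewrite mulmx_sumr; under eq_bigr => w _ do rewrite claim.
  rewrite -mulmx_suml; congr (_ *m _).
  by rewrite [in RHS](reindex_inj (mulgI y)).
move=> e; have [c ->] := span e.
set S := (\sum_w rho (b w) *m X *m _).
rewrite !(modsum _ _ _ _ _ _ _ hm) !(modsum _ _ _ _ _ _ _ hm').
rewrite (mulmx_suml S) (mulmx_sumr S); apply: eq_bigr => y _.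
by rewrite -scalemxAl hb scalemxAr.
Qed.

Lemma iso_of (F : fieldType) (E : falgType F) n n'
  (rho : E -> 'M[F]_n) (rho' : E -> 'M[F]_n') (X : 'M[F]_(n, n'))
  (hX : forall e, rho e *m X = X *m rho' e) :
  n = n' -> \rank X = n -> module_iso rho rho'.
Proof.
move=> h; subst n' => rk.
have U : X \in unitmx by rewrite -row_free_unit /row_free rk.
exists (invmx X); split.
- by rewrite row_free_unit unitmx_inv.
- by rewrite row_full_unit unitmx_inv.
by move=> e; rewrite -[LHS](mulmxK U) -(mulmxA _ (rho e)) hX mulmxA mulVmx // mul1mx.
Qed.

Lemma trace_delta (R : nzRingType) n (j l : 'I_n) :
  \tr (delta_mx j l : 'M[R]_n) = (j == l)%:R.
Proof.
rewrite /mxtrace (bigD1 j) //= big1 ?addr0; first by rewrite mxE eqxx.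
by move=> i /negbTE hi; rewrite mxE hi.
Qed.

Lemma final_arith (R : fieldType) n (t s : 'M[R]_n) (a d : R) :
  \sum_i \sum_j \sum_k \sum_l t j i * s k l * ((a * (j == l)%:R / d) *+ (i == k))
  = a / d * \tr (s *m t).
Proof.
set c := a / d.
transitivity (\sum_i \sum_j \sum_k
   \sum_l (t j i * s k j * c * (i == k)%:R) * (j == l)%:R).
  apply: eq_bigr => i _; apply: eq_bigr => j _; apply: eq_bigr => k _.
  apply: eq_bigr => l _; rewrite -[_ *+ (i == k)]mulr_natr [a * _ / d]mulrAC -/c.
  case: (j =P l) => [<-|/eqP/negbTE h]; rewrite ?eqxx ?h /=; ring.
under eq_bigr => i _ do under eq_bigr => j _ do under eq_bigr => k _ do
  rewrite sum_delta.
transitivity (\sum_i \sum_j \sum_k (t j i * s i j * c) * (i == k)%:R).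
  apply: eq_bigr => i _; apply: eq_bigr => j _; apply: eq_bigr => k _.
  by case: (i =P k) => [<-|/eqP/negbTE h]; rewrite ?eqxx ?h /=; ring.
under eq_bigr => i _ do under eq_bigr => j _ do rewrite sum_delta.
rewrite /mxtrace mulr_sumr; apply: eq_bigr => i _.
rewrite mxE mulr_sumr; apply: eq_bigr => j _; ring.
Qed.

Lemma card_sum (R : nzRingType) (T : finType) (x : R) : \sum_(w : T) x = x *+ #|T|.
Proof. by rewrite sumr_const. Qed.

Theorem mainTheorem13
    (F : closedFieldType) (hF : [pchar F] =i pred0)
    (gT : finGroupType) (E : falgType F)
    (Es : gT -> {vspace E})
    (hdim : forall w : gT, \dim (Es w) = 1%N)
    (hmul : forall w y : gT, prodv (Es w) (Es y) = Es (w * y)%g)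
    (hsum : (\sum_(w : gT) Es w)%VS = fullv)
    (hdirect : directv (\sum_(w : gT) Es w))
    (b : gT -> E)
    (hb : forall w : gT, b w \in Es w /\ b w != 0)
    (n n' : nat) (rho : E -> 'M[F]_n) (rho' : E -> 'M[F]_n')
    (hV : simple_module rho) (hV' : simple_module rho')
    (t : 'M[F]_n) (t' : 'M[F]_n')
    (ht : t \in unitmx) (ht' : t' \in unitmx) :
  (~ module_iso rho rho' -> Nsum b rho t rho' t' = 0) /\
  Nsum b rho t rho t = 1.
Proof.
have [span bu bprod] := alg_facts _ _ _ _ hdim hmul hsum _ hb.
have hm : is_module rho by case: hV.
have hm' : is_module rho' by case: hV'.
have n0 : (0 < n)%N by case: hV => _ [].
have hchar := (pcharf0P _).1 hF.
split.
  move=> niso; rewrite /Nsum.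
  rewrite (key_sum _ _ _ _ (fun w => rho (b w)) (fun w => rho' (b w)^-1)).
  have S0 j l : \sum_w rho (b w) *m delta_mx j l *m rho' (b w)^-1 = 0.
    have hX := S_inter _ _ _ _ _ _ _ hm hm' _ span bu bprod (delta_mx j l).
    have hX' : forall e, rho e *m (\sum_w rho (b w) *m delta_mx j l *m rho' (b w)^-1)
       = (\sum_w rho (b w) *m delta_mx j l *m rho' (b w)^-1) *m rho' e by [].
    case: (schur _ _ _ _ _ _ hV hV' _ hX') => // [[e rk]].
    by exfalso; apply: niso; exact: (iso_of _ _ _ _ _ _ _ hX' e rk).
  rewrite big1 ?mulr0 // => i _; rewrite big1 // => j _; rewrite big1 // => k _.
  by rewrite big1 // => l _; rewrite S0 mxE mulr0.
have Ssc (X : 'M[F]_n) : \sum_w rho (b w) *m X *m rho (b w)^-1 =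
    (#|gT|%:R * \tr X / n%:R)%:M.
  have hX := S_inter _ _ _ _ _ _ _ hm hm _ span bu bprod X.
  have [mu hmu] := schur_scalar _ _ _ _ hV _ hX.
  have htr : \tr (\sum_w rho (b w) *m X *m rho (b w)^-1) = #|gT|%:R * \tr X.
    rewrite raddf_sum /=.
    have [_ h1 hM] := hm.
    under eq_bigr => w _ do rewrite mxtrace_mulC mulmxA -hM mulVr ?bu // h1 mul1mx.
    by rewrite sumr_const mulr_natl cardT.
  rewrite hmu; congr (_%:M); move: htr; rewrite hmu mxtrace_scalar => <-.
  have nz : n%:R != 0 :> F by rewrite hchar -lt0n.
  by rewrite -[mu *+ n]mulr_natr mulfK.
rewrite /Nsum.
rewrite (key_sum _ _ _ _ (fun w => rho (b w)) (fun w => rho (b w)^-1)).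
under eq_bigr => i _ do under eq_bigr => j _ do under eq_bigr => k _ do
  under eq_bigr => l _ do rewrite Ssc mxE trace_delta.
rewrite final_arith mulVmx // mxtrace1.
have g0 : (0 < #|gT|)%N by apply/card_gt0P; exists 1%g.
have gz : #|gT|%:R != 0 :> F by rewrite hchar -lt0n.
have nz : n%:R != 0 :> F by rewrite hchar -lt0n.
by rewrite divfK // mulVf.
Qed.
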